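(* Let $\mathcal F_d$ be a set of OPFs on $\mathbb C^d$ containing the unit OPF ${\bf u}$ and satisfying C1 and the Finiteness Principle, and let $\bar\Gamma^d$ be the associated representation of $\mathrm{SU}(d)$ on the real span $V_d$ of $\mathcal F_d$. Then $\bar\Gamma^d$ contains a unique trivial subrepresentation (the trivial representation occurs exactly once, spanned by ${\bf u}$).
   Context: An OPF on $\mathbb C^d$ is a function from rays of $\mathbb C^d$ to $[0,1]$; the unit OPF is ${\bf u}(\psi)=1$ for all $\psi$. (C1): for $F\in\mathcal F_d$, $U\in\mathrm{SU}(d)$, the function $F\circ U:\psi\mapsto F(U\psi)$ lies in $\mathcal F_d$. Finiteness: $V_d$, the real span of $\mathcal F_d$, is finite-dimensional. The associated representation $\bar\Gamma^d$ is defined on $V_d$ by $\bar\Gamma^d(U)F=F\circ U$, i.e. for a basis $F_i$, $F_i(U\psi)=\sum_j\bar\Gamma_i^{\,j}(U)F_j(\psi)$. *)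

(* Defs.v *)
From HB Require Import structures.
From mathcomp Require Import all_boot all_order all_algebra.
From mathcomp Require Import complex.
Set Implicit Arguments. Unset Strict Implicit. Unset Printing Implicit Defensive.
Import Order.TTheory GRing.Theory Num.Theory.
Local Open Scope ring_scope.

Section OPF.
Variables (R : rcfType) (d : nat).
Local Notation C := (R[i]).

Definition adjmx m n (A : 'M[C]_(m, n)) : 'M[C]_(n, m) := (map_mx Num.conj A)^T.

Definition unitvec (psi : 'cV[C]_d) : bool := adjmx psi *m psi == 1%:M.

(* Points of C^d of norm one; a ray is such a point up to a phase.  A function
   on rays is a phase-invariant function on unit vectors (see [ray_fun]). *)
Definition uvec := {psi : 'cV[C]_d | unitvec psi}.

Definition ray_fun (F : uvec -> R) : Prop :=
  forall psi phi : uvec,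
    (exists c : C, c * Num.conj c = 1 /\ val phi = c *: val psi) -> F phi = F psi.

Definition OPF (F : uvec -> R) : Prop :=
  ray_fun F /\ forall psi, 0 <= F psi <= 1.

Definition unitOPF : uvec -> R := fun _ => 1.

Definition SU : pred 'M[C]_d :=
  fun U => (U *m adjmx U == 1%:M) && (\det U == 1).

(* action of a matrix on unit vectors (only used for U in SU(d), where
   U psi is again a unit vector) *)
Definition act (U : 'M[C]_d) (psi : uvec) : uvec :=
  odflt psi (insub (U *m val psi)).

Definition compU (F : uvec -> R) (U : 'M[C]_d) : uvec -> R :=
  fun psi => F (act U psi).

Definition rspan (S : (uvec -> R) -> Prop) (G : uvec -> R) : Prop :=
  exists n (a : 'I_n -> R) (f : 'I_n -> uvec -> R),
    (forall i, S (f i)) /\ forall psi, G psi = \sum_(i < n) a i * f i psi.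

Definition C1 (S : (uvec -> R) -> Prop) : Prop :=
  forall F U, S F -> U \in SU -> S (compU F U).

Definition finite_dim_span (S : (uvec -> R) -> Prop) : Prop :=
  exists n (b : 'I_n -> uvec -> R),
    (forall i, rspan S (b i)) /\
    forall G, rspan S G -> exists a : 'I_n -> R,
      forall psi, G psi = \sum_(i < n) a i * b i psi.

Definition Gamma (U : 'M[C]_d) (F : uvec -> R) : uvec -> R := compU F U.

Definition fixed_vec (S : (uvec -> R) -> Prop) (G : uvec -> R) : Prop :=
  rspan S G /\ forall U, U \in SU -> forall psi, Gamma U G psi = G psi.

End OPF.

(* Main.v *)
Require Import Defs.
From HB Require Import structures.
From mathcomp Require Import all_boot all_order all_algebra.
From mathcomp Require Import complex.
From mathcomp Require Import ring.
Import Order.TTheory GRing.Theory Num.Theory.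
Local Open Scope ring_scope.

Section Aux.
Variable R : rcfType.
Local Notation C := (R[i]).

Lemma adjmxM m n p (A : 'M[C]_(m, n)) (B : 'M[C]_(n, p)) :
  adjmx (A *m B) = adjmx B *m adjmx A.
Proof. by rewrite /adjmx map_mxM trmx_mul. Qed.

Lemma adjmxD m n (A B : 'M[C]_(m, n)) : adjmx (A + B) = adjmx A + adjmx B.
Proof. by rewrite /adjmx map_mxD linearD. Qed.

Lemma adjmxN m n (A : 'M[C]_(m, n)) : adjmx (- A) = - adjmx A.
Proof. by rewrite /adjmx map_mxN linearN. Qed.

Lemma adjmxB m n (A B : 'M[C]_(m, n)) : adjmx (A - B) = adjmx A - adjmx B.
Proof. by rewrite adjmxD adjmxN. Qed.

Lemma adjmxZ m n a (A : 'M[C]_(m, n)) : adjmx (a *: A) = a^* *: adjmx A.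
Proof. by rewrite /adjmx map_mxZ linearZ. Qed.

Lemma adjmx1 n : adjmx (1%:M : 'M[C]_n) = 1%:M.
Proof. by rewrite /adjmx map_mx1 trmx1. Qed.

Lemma adjmxK m n (A : 'M[C]_(m, n)) : adjmx (adjmx A) = A.
Proof.
by apply/matrixP => i j; rewrite /adjmx !mxE conjCK.
Qed.

Definition ip {n} (x y : 'cV[C]_n) : C := (adjmx x *m y) 0 0.

Lemma ipE n (x y : 'cV[C]_n) : adjmx x *m y = (ip x y)%:M.
Proof. exact: mx11_scalar. Qed.

Lemma ip_conj n (x y : 'cV[C]_n) : (ip x y)^* = ip y x.
Proof.
rewrite /ip !mxE rmorph_sum; apply: eq_bigr => i _.
by rewrite /adjmx !mxE rmorphM /= conjCK mulrC.
Qed.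

Lemma ip_ge0 n (x : 'cV[C]_n) : 0 <= ip x x.
Proof.
rewrite /ip mxE; apply: sumr_ge0 => i _.
by rewrite /adjmx !mxE mulrC -normCK exprn_ge0.
Qed.

Lemma ip_eq0 n (x : 'cV[C]_n) : ip x x = 0 -> x = 0.
Proof.
rewrite /ip mxE => H; apply/matrixP => i j; rewrite ord1 mxE.
have H0 : forall k, true -> 0 <= (adjmx x) 0 k * x k 0.
  by move=> k _; rewrite /adjmx !mxE mulrC -normCK exprn_ge0.
have := psumr_eq0P H0 H (i:=i) isT.
rewrite /adjmx !mxE mulrC -normCK => /eqP; rewrite expf_eq0 /= normr_eq0.
by move/eqP.
Qed.

Lemma ipBl n (x y z : 'cV[C]_n) : ip (x - y) z = ip x z - ip y z.
Proof. by rewrite /ip adjmxB mulmxBl !mxE. Qed.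
Lemma ipBr n (x y z : 'cV[C]_n) : ip x (y - z) = ip x y - ip x z.
Proof. by rewrite /ip mulmxBr !mxE. Qed.
Lemma ipZl n k (x z : 'cV[C]_n) : ip (k *: x) z = k^* * ip x z.
Proof. by rewrite /ip adjmxZ -scalemxAl mxE. Qed.
Lemma ipZr n k (x z : 'cV[C]_n) : ip x (k *: z) = k * ip x z.
Proof. by rewrite /ip -scalemxAr mxE. Qed.

Lemma house n (psi phi : 'cV[C]_n) : ip psi psi = 1 -> ip phi phi = 1 ->
  exists H : 'M[C]_n, exists c : C,
    [/\ H *m adjmx H = 1%:M, c * c^* = 1 & H *m psi = c *: phi].
Proof.
move=> hpsi hphi.
set a := ip phi psi.
pose c : C := if a == 0 then 1 else a / `|a|.
have cc : c * c^* = 1.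
  rewrite /c; case: eqP => [_|/eqP a0]; first by rewrite rmorph1 mulr1.
  rewrite rmorphM /= fmorphV /= conj_normC mulrACA -normCK -expr2. by rewrite -exprMn divff ?expr1n // normr_eq0.
have ca : c^* * a = `|a|.
  rewrite /c; case: eqP => [->|/eqP a0]; first by rewrite normr0 mulr0.
  rewrite rmorphM /= fmorphV /= conj_normC. rewrite mulrAC [_^* * a]mulrC -normCK expr2.
  by rewrite -mulrA divff ?mulr1 // normr_eq0.
have ca' : c * a^* = `|a|.
  by have := congr1 Num.conj ca; rewrite rmorphM /= conjCK conj_normC.
set v := psi - c *: phi.
have hvpsi : ip v psi = 1 - `|a|.
  by rewrite /v ipBl ipZl hpsi ca.
have hpa : ip psi phi = a^* by rewrite /a ip_conj.
have hvw : forall w, ip v w = ip psi w - c^* * ip phi w.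
  by move=> w; rewrite /v ipBl ipZl.
have hpv : ip psi v = 1 - c * a^* by rewrite /v ipBr ipZr hpsi hpa.
have hphv : ip phi v = a - c by rewrite /v ipBr ipZr hphi mulr1.
have hvv : ip v v = 2 * ip v psi.
  rewrite hvw hpv hphv hvpsi ca' mulrBr ca mulrC cc.
  ring.
case: (eqVneq v 0) => [v0|vn0].
  exists 1%:M, c; split => //; first by rewrite adjmx1 mulmx1.
  by rewrite mul1mx; apply/eqP; rewrite -subr_eq0 -/v v0.
have n0 : ip v v != 0 by apply/eqP => /ip_eq0; apply/eqP.
set k := 2 / ip v v.
set P := v *m adjmx v.
have kn : k * ip v psi = 1.
  have w0 : ip v psi != 0 by apply/eqP => h; move: n0; rewrite hvv h mulr0 eqxx.
  by rewrite /k hvv; field.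
have PP : P *m P = ip v v *: P.
  by rewrite /P -mulmxA (mulmxA (adjmx v)) ipE mul_scalar_mx -scalemxAr.
have kc : k^* = k.
  by rewrite /k rmorphM /= fmorphV /= ip_conj conjC_nat.
exists (1%:M - k *: P), c; split => //.
  rewrite adjmxB adjmx1 adjmxZ kc /P adjmxM adjmxK -/P.
  rewrite mulmxBl mulmxBr mul1mx mul1mx mulmxBr mulmx1 -scalemxAl -scalemxAr PP !scalerA.

  have -> : k * k * ip v v = k + k.
    by rewrite /k; field.
  rewrite scalerDl; set Q := k *: P.
  by rewrite (opprD Q Q) addrA subrr add0r opprK subrK.
rewrite mulmxBl mul1mx -scalemxAl /P -mulmxA ipE mul_mx_scalar scalerA kn scale1r.
by rewrite /v opprB addrC subrK.
Qed.

Lemma adjmx_det n (A : 'M[C]_n) : \det (adjmx A) = (\det A)^*.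
Proof. by rewrite /adjmx det_tr det_map_mx. Qed.

Lemma scale_SU n (H : 'M[C]_n) : (0 < n)%N -> H *m adjmx H = 1%:M ->
  exists mu : C, mu * mu^* = 1 /\ mu *: H \in @SU R n.
Proof.
move=> n0 hH.
set de := \det H.
have dd : de * de^* = 1 by rewrite -adjmx_det -det_mulmx hH det1.
have nd : `|de| = 1.
  apply/eqP; rewrite -sqrp_eq1 ?normr_ge0 //.
  by rewrite normCK dd.
set mu := n.-root (de^*).
have mm : mu * mu^* = 1.
  by rewrite -normCK /mu norm_rootC norm_conjC nd rootC1 // expr1n.
exists mu; split => //.
apply/andP; split.
  by rewrite adjmxZ -scalemxAl -scalemxAr hH scalerA mm scale1r.
by rewrite detZ /mu rootCK // mulrC dd.
Qed.

End Aux.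
Arguments ip {R n}.
Arguments house {R n psi phi}.
Arguments scale_SU {R n H}.

Section Main.
Variables (R : rcfType) (d : nat).
Local Notation C := (R[i]).

Lemma uvec_ip (psi : uvec R d) : ip (val psi) (val psi) = 1.
Proof.
have := valP psi; rewrite /unitvec ipE => /eqP /matrixP /(_ 0 0).
by rewrite !mxE /= mulr1n.
Qed.

Lemma actE U (psi : uvec R d) : U \in @SU R d -> val (act U psi) = U *m val psi.
Proof.
move=> /andP [/eqP hU _].
have hU' := mulmx1C hU.
have hu : unitvec (U *m val psi).
  by rewrite /unitvec adjmxM mulmxA -(mulmxA (adjmx _)) hU' mulmx1; exact: (valP psi).
by rewrite /act (insubT _ hu).
Qed.

Lemma rspan_ray (S : (uvec R d -> R) -> Prop) G :
  (forall F, S F -> OPF F) -> rspan S G -> ray_fun G.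
Proof.
move=> hS [n [a [f [hf hG]]]] psi phi hc.
rewrite !hG; apply: eq_bigr => i _; congr (_ * _).
by have [hr _] := hS _ (hf i); apply: hr.
Qed.

End Main.
Arguments uvec_ip {R d}.
Arguments actE {R d U psi}.

Theorem mainTheorem4 (R : rcfType) (d : nat) (hd : (0 < d)%N)
  (Fd : (uvec R d -> R) -> Prop)
  (hOPF : forall F, Fd F -> OPF F)
  (hu : Fd (@unitOPF R d))
  (hC1 : C1 Fd)
  (hfin : finite_dim_span Fd) :
  (* the trivial representation occurs exactly once: the subspace of
     Gamma-fixed vectors of V_d is the line spanned by the (nonzero) unit OPF *)
  (exists psi : uvec R d, @unitOPF R d psi <> 0) /\
  (forall G, fixed_vec Fd G <->
     exists c : R, forall psi, G psi = c * @unitOPF R d psi).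
Proof.
pose i0 : 'I_d := Ordinal hd.
pose e : 'cV[R[i]]_d := delta_mx i0 0.
have he : unitvec e.
  rewrite /unitvec /e /adjmx map_delta_mx ?rmorph1 //= trmx_delta mul_delta_mx.
  by apply/eqP/matrixP => i j; rewrite !ord1 !mxE.
pose e0 : uvec R d := exist _ e he.
split; first by exists e0; rewrite /unitOPF; apply/eqP; exact: oner_neq0.
move=> G; split.
  case=> hspan hfix.
  have ray := @rspan_ray R d Fd G hOPF hspan.
  exists (G e0) => psi; rewrite /unitOPF mulr1.
  have [H [c [hH hc hHpsi]]] := house (uvec_ip psi) (uvec_ip e0).
  have [mu [hmu hU]] := scale_SU hd hH.
  have := hfix _ hU psi; rewrite /Gamma /compU => <-.
  apply: ray; exists (mu * c); split.
    by rewrite rmorphM /= mulrACA hmu hc mulr1.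
  by rewrite actE // -scalemxAl hHpsi scalerA.
case=> c hc; split.
  exists 1%N, (fun _ => c), (fun _ => @unitOPF R d); split => // psi.
  by rewrite big_ord1 hc.
by move=> U _ psi; rewrite /Gamma /compU !hc.
Qed.
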